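(* Fix $\delta>0$. For $\pi\in\{\texttt{G-HCLA},\texttt{GP-HCLA}\}$, the set $\mathcal B=\{t\ge1:|U(G(t);\hat\mu(t))-U(G(t);\mu)|\ge\delta\}$ satisfies $\mathbb E[|\mathcal B|]\le 4MK+\frac{2M^3K}{\delta^2}$.
   Context: Model: $M$ agents, $K>M$ arms; pair $(m,k)$ has a Bernoulli distribution of mean $\mu_{m,k}\in[0,1]$. Each round each agent pulls an arm (assignment $G(t)$ of arms $k^G_m$ to agents, a ''matching''; $\mathcal G$ the set of assignments); an agent receives an independent Bernoulli sample of its arm if no other agent pulls that arm, else $0$. Each agent may also query one arm per round as a hint, observing an independent sample. $U(G;w)=\sum_m w_{m,k^G_m}\mathbb 1\{\forall m'\ne m:k^G_{m'}\ne k^G_m\}$; $G^*=\arg\max U(G;\mu)$ unique. $\mathrm{kl}$ is the Bernoulli KL divergence, $f(t)=\log t+4\log\log t$. Covering matchings $R_i$ ($i\le K$) match agent $m$ to arm $((m+i-2)\bmod K)+1$, $\mathcal R=\{R_i\}$. $\texttt{Hungarian}(w)$ returns an assignment of agents to distinct arms maximizing $\sum_m w_{m,k^G_m}$. Both algorithms are centralized and maintain per edge $N_{m,k}(t)$ (number of observations of $(m,k)$ from pulls and hints before $t$), their empirical mean $\hat\mu_{m,k}(t)$, and $d_{m,k}(t)=\sup\{q\ge0:N_{m,k}(t)\mathrm{kl}(\hat\mu_{m,k}(t),q)\le f(t)\}$ (initialized to $0$). At round $t$: $G(t)=\texttt{Hungarian}(\hat\mu(t))$, $G'(t)=\texttt{Hungarian}(d(t))$;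 if $U(G'(t);d(t))>U(G(t);\hat\mu(t))$ a hint matching $G^{\mathrm{hint}}(t)$ is chosen and each agent queries its arm in it; then agents pull per $G(t)$ and update. In $\texttt{GP-HCLA}$, $G^{\mathrm{hint}}(t)$ is, w.p. $1/2$ each, either the $R\in\mathcal R$ containing an edge of $G'(t)$ with minimal $N_{m,k}(t)$, or a uniformly random element of $\mathcal R$. In $\texttt{G-HCLA}$, $G^{\mathrm{hint}}(t)$ is, w.p. $1/2$ each, either $G'(t)$ or a uniformly random element of $\mathcal R$. *)

(* Defs.v *)
From HB Require Import structures.
From mathcomp Require Import all_boot all_order all_algebra.
From mathcomp Require Import all_classical all_reals all_analysis.
Set Implicit Arguments. Unset Strict Implicit. Unset Printing Implicit Defensive.
Import Order.TTheory GRing.Theory Num.Theory.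
Local Open Scope classical_set_scope.
Local Open Scope ring_scope.

Section Model.
Variables (R : realType) (M K : nat).

(* An assignment G of arms to agents (element of \mathcal G). Agents and
   arms are 0-indexed: agent m in 'I_M, arm k in 'I_K. *)
Definition assignment := {ffun 'I_M -> 'I_K}.

Definition U (G : assignment) (w : 'I_M -> 'I_K -> R) : R :=
  \sum_(m < M)
    (if [forall m' : 'I_M, (m' != m) ==> (G m' != G m)] then w m (G m) else 0).

Definition unique_optimum (mu : 'I_M -> 'I_K -> R) : Prop :=
  exists Gs : assignment, forall G : assignment, G != Gs -> U G mu < U Gs mu.

Definition hungarian_spec (hung : ('I_M -> 'I_K -> R) -> assignment) : Prop :=
  forall w, injectiveb (fun m => hung w m) /\
    forall G : assignment, injectiveb (fun m => G m) ->
      \sum_(m < M) w m (G m) <= \sum_(m < M) w m (hung w m).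

(* Bernoulli KL divergence, with the usual conventions 0 log 0 = 0 and
   +oo when the second argument is 0 or 1 and differs from the first. *)
Definition klB (p q : R) : \bar R :=
  let t1 : \bar R := if p == 0 then 0%E else if q == 0 then +oo%E
                     else (p * ln (p / q))%:E in
  let t2 : \bar R := if p == 1 then 0%E else if q == 1 then +oo%E
                     else ((1 - p) * ln ((1 - p) / (1 - q)))%:E in
  (t1 + t2)%E.

Definition fexp (t : nat) : R := ln (t%:R) + 4 * ln (ln (t%:R)).

Definition muhat (N S : 'I_M -> 'I_K -> nat) (m : 'I_M) (k : 'I_K) : R :=
  if N m k == 0%N then 0 else (S m k)%:R / (N m k)%:R.

Definition dind (N S : 'I_M -> 'I_K -> nat) (t : nat) (m : 'I_M) (k : 'I_K) : R :=
  if N m k == 0%N then 0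
  else sup [set q : R | 0 <= q <= 1 /\
                   ((N m k)%:R%:E * klB (muhat N S m k) q <= (fexp t)%:E)%E].

(* Covering matchings: R_i matches agent m to arm (m + i) mod K
   (0-indexed version of ((m+i-2) mod K) + 1). *)
Lemma ord_pos (i : 'I_K) : (0 < K)%N.
Proof. exact: leq_ltn_trans (leq0n i) (ltn_ord i). Qed.

Definition cov (i : 'I_K) : assignment :=
  [ffun m : 'I_M => Ordinal (ltn_pmod (m + i) (ord_pos i))].

(* index of the covering matching containing edge (m,k) (valid when M <= K) *)
Definition cov_idx (m : 'I_M) (k : 'I_K) : 'I_K :=
  Ordinal (ltn_pmod (k + (K - m)) (ord_pos k)).

Definition sel_spec
  (sel : ('I_M -> 'I_K -> nat) -> assignment -> 'I_M) : Prop :=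
  forall N G m, (N (sel N G) (G (sel N G)) <= N m (G m))%N.

Section Algo.
(* gp = true : GP-HCLA ; gp = false : G-HCLA *)
Variables (gp : bool) (hung : ('I_M -> 'I_K -> R) -> assignment)
  (sel : ('I_M -> 'I_K -> nat) -> assignment -> 'I_M).
(* Randomness (realized): X m k j = j-th observation (0-indexed) of edge (m,k);
   coin t = fair coin of round t; unif t = uniform index in 'I_K of round t. *)
Variables (X : 'I_M -> 'I_K -> nat -> bool) (coin : nat -> bool)
  (unif : nat -> 'I_K).

Definition state := (('I_M -> 'I_K -> nat) * ('I_M -> 'I_K -> nat))%type.

Definition hint_matching (N : 'I_M -> 'I_K -> nat) (G' : assignment)
  (c : bool) (u : 'I_K) : assignment :=
  if c then (if gp then cov (cov_idx (sel N G') (G' (sel N G'))) else G')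
  else cov u.

Definition step (t : nat) (st : state) : state :=
  let N := st.1 in let S := st.2 in
  let mh := muhat N S in
  let d := dind N S t in
  let G := hung mh in
  let G' := hung d in
  let hint := U G' d > U G mh in
  let H := hint_matching N G' (coin t) (unif t) in
  let N1 := fun m k => (N m k + (hint && (H m == k)))%N in
  let S1 := fun m k => (S m k + [&& hint, H m == k & X m k (N m k)])%N in
  let N2 := fun m k => (N1 m k + (G m == k))%N in
  let S2 := fun m k => (S1 m k + ((G m == k) && X m k (N1 m k)))%N in
  (N2, S2).

(* state_before n = (N(n+1), S(n+1)), the state at the start of round n+1 *)
Fixpoint state_before (n : nat) : state :=
  match n with
  | 0%N => (fun _ _ => 0%N, fun _ _ => 0%N)
  | n'.+1 => step n'.+1 (state_before n')
  end.

End Algo.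

Definition state_at gp hung sel X coin unif (t : nat) : state :=
  state_before gp hung sel X coin unif t.-1.

Definition inB (mu : 'I_M -> 'I_K -> R) (delta : R) gp hung sel X coin unif
  (t : nat) : bool :=
  let st := state_at gp hung sel X coin unif t in
  let mh := muhat st.1 st.2 in
  let G := hung mh in
  delta <= `|U G mh - U G mu|.

Definition cardB mu delta gp hung sel X coin unif : \bar R :=
  (\sum_(1 <= t <oo) ((inB mu delta gp hung sel X coin unif t)%:R : R)%:E)%E.

(* Joint law of the randomness: all X m k j, coin t, unif t are mutually
   independent, X m k j ~ Bernoulli(mu m k), coin t ~ Bernoulli(1/2),
   unif t ~ Uniform('I_K). Stated as the factorization of the joint pmf on
   every finite family of distinct variables. *)
Definition randomness_law (d : measure_display) (T : measurableType d)
  (P : probability T R) (mu : 'I_M -> 'I_K -> R)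
  (X : 'I_M -> 'I_K -> nat -> T -> bool) (coin : nat -> T -> bool)
  (unif : nat -> T -> 'I_K) : Prop :=
  [/\ (forall m k j b, measurable [set w : T | X m k j w = b]),
      (forall t b, measurable [set w : T | coin t w = b]),
      (forall t i, measurable [set w : T | unif t w = i]) &
      forall (s1 : seq ('I_M * 'I_K * nat)) (s2 s3 : seq nat)
             (b1 : 'I_M * 'I_K * nat -> bool) (b2 : nat -> bool)
             (u3 : nat -> 'I_K),
        uniq s1 -> uniq s2 -> uniq s3 ->
        P [set w : T | [&& all (fun e => X e.1.1 e.1.2 e.2 w == b1 e) s1,
                       all (fun t => coin t w == b2 t) s2 &
                       all (fun t => unif t w == u3 t) s3]]
        = ((\prod_(e <- s1) (if b1 e then mu e.1.1 e.1.2
                             else 1 - mu e.1.1 e.1.2))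
           * (2^-1) ^+ size s2 * (K%:R^-1) ^+ size s3)%:E].

End Model.

(* Main.v *)
Require Import Defs.
From HB Require Import structures.
From mathcomp Require Import all_boot all_order all_algebra.
From mathcomp Require Import all_classical all_reals all_analysis.
From mathcomp Require Import measurable_realfun lebesgue_measure.
From mathcomp Require Import ring lra.
Import Order.TTheory GRing.Theory Num.Theory.
Local Open Scope ring_scope.
Set Implicit Arguments. Unset Strict Implicit.

Definition meanb (R : realType) (s : seq bool) : R :=
  if size s == 0%N then 0 else (count id s)%:R / (size s)%:R.

Section EpSec.
Variables (R : realType) (p : R).
Hypothesis p01 : 0 <= p <= 1.

Fixpoint Ep (n : nat) (G : seq bool -> R) : R :=
  match n with
  | 0%N => G [::]
  | n'.+1 => p * Ep n' (fun s => G (true :: s)) + (1 - p) * Ep n' (fun s => G (false :: s))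
  end.

Lemma Ep_const n c : Ep n (fun _ => c) = c.
Proof. elim: n => [|n IH] //=; rewrite IH; ring. Qed.

Lemma Ep_add n F G : Ep n (fun s => F s + G s) = Ep n F + Ep n G.
Proof.
elim: n F G => [|n IH] F G //=.
rewrite (IH (fun s => F (true :: s))) (IH (fun s => F (false :: s))); ring.
Qed.

Lemma Ep_scale n c F : Ep n (fun s => c * F s) = c * Ep n F.
Proof.
elim: n F => [|n IH] F //=.
rewrite (IH (fun s => F (true :: s))) (IH (fun s => F (false :: s))); ring.
Qed.

Lemma Ep_le n F G : (forall s, size s = n -> F s <= G s) -> Ep n F <= Ep n G.
Proof.
elim: n F G => [|n IH] F G h /=; first exact: h.
have p0 : 0 <= p by case/andP: p01.
have p1 : 0 <= 1 - p by rewrite subr_ge0; case/andP: p01.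
apply: lerD; apply: ler_wpM2l => //; apply: IH => s hs; apply: h => /=; by rewrite hs.
Qed.

Lemma Ep_ext n F G : (forall s, size s = n -> F s = G s) -> Ep n F = Ep n G.
Proof.
move=> h; apply/eqP; rewrite eq_le !Ep_le // => s hs; by rewrite h.
Qed.

Definition yb (c : bool) : R := (nat_of_bool c)%:R - p.
Definition Sy (s : seq bool) : R := \sum_(c <- s) yb c.

Lemma Sy_count s : Sy s = (count id s)%:R - (size s)%:R * p.
Proof.
elim: s => [|c s IH]; first by rewrite /Sy big_nil mul0r subr0.
rewrite /Sy big_cons -/(Sy s) IH /yb /= natrD -addn1 natrD; ring.
Qed.

Lemma Ep_pow_step n k : Ep n.+1 (fun s => Sy s ^+ k) =
  p * Ep n (fun s => (yb true + Sy s) ^+ k) + (1 - p) * Ep n (fun s => (yb false + Sy s) ^+ k).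
Proof. by rewrite /= /Sy; under eq_fun do rewrite big_cons; under [X in _ + _ * Ep _ X]eq_fun do rewrite big_cons. Qed.

Lemma Ep_poly n c0 c1 c2 c3 c4 :
  Ep n (fun s => c0 + c1 * Sy s + c2 * Sy s ^+ 2 + c3 * Sy s ^+ 3 + c4 * Sy s ^+ 4) =
  c0 + c1 * Ep n Sy + c2 * Ep n (fun s => Sy s ^+ 2) + c3 * Ep n (fun s => Sy s ^+ 3)
  + c4 * Ep n (fun s => Sy s ^+ 4).
Proof. by rewrite !Ep_add !Ep_scale Ep_const. Qed.

Lemma Ep_b1 n a : Ep n (fun s => (a + Sy s) ^+ 1) = a + Ep n Sy.
Proof.
have -> : Ep n (fun s => (a + Sy s) ^+ 1) = Ep n (fun s => a + 1 * Sy s + 0 * Sy s ^+ 2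
   + 0 * Sy s ^+ 3 + 0 * Sy s ^+ 4) by apply: Ep_ext => s _; ring.
rewrite Ep_poly; ring.
Qed.

Lemma Ep_b2 n a : Ep n (fun s => (a + Sy s) ^+ 2) =
  a ^+ 2 + 2 * a * Ep n Sy + Ep n (fun s => Sy s ^+ 2).
Proof.
have -> : Ep n (fun s => (a + Sy s) ^+ 2) = Ep n (fun s => a ^+ 2 + (2 * a) * Sy s + 1 * Sy s ^+ 2
   + 0 * Sy s ^+ 3 + 0 * Sy s ^+ 4) by apply: Ep_ext => s _; ring.
rewrite Ep_poly; ring.
Qed.

Lemma Ep_b4 n a : Ep n (fun s => (a + Sy s) ^+ 4) =
  a ^+ 4 + 4 * a ^+ 3 * Ep n Sy + 6 * a ^+ 2 * Ep n (fun s => Sy s ^+ 2)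
  + 4 * a * Ep n (fun s => Sy s ^+ 3) + Ep n (fun s => Sy s ^+ 4).
Proof.
have -> : Ep n (fun s => (a + Sy s) ^+ 4) = Ep n (fun s => a ^+ 4 + (4 * a ^+ 3) * Sy s
   + (6 * a ^+ 2) * Sy s ^+ 2 + (4 * a) * Sy s ^+ 3 + 1 * Sy s ^+ 4) by apply: Ep_ext => s _; ring.
rewrite Ep_poly; ring.
Qed.

Definition v := p * (1 - p).

Lemma Ep_S1 n : Ep n Sy = 0.
Proof.
elim: n => [|n IH]; first by rewrite /= /Sy big_nil.
have -> : Ep n.+1 Sy = Ep n.+1 (fun s => Sy s ^+ 1) by apply: Ep_ext => s _; rewrite expr1.
rewrite Ep_pow_step !Ep_b1 IH /yb /=; ring.
Qed.

Lemma Ep_S2 n : Ep n (fun s => Sy s ^+ 2) = n%:R * v.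
Proof.
elim: n => [|n IH]; first by rewrite /= /Sy big_nil expr0n mul0r.
rewrite Ep_pow_step !Ep_b2 Ep_S1 IH /yb /v /= -addn1 natrD; ring.
Qed.

Lemma Ep_S4 n : Ep n (fun s => Sy s ^+ 4) =
  n%:R * (v * ((1 - p) ^+ 3 + p ^+ 3)) + 3 * n%:R * (n%:R - 1) * v ^+ 2.
Proof.
elim: n => [|n IH]; first by rewrite /= /Sy big_nil; ring.
rewrite Ep_pow_step !Ep_b4 Ep_S1 Ep_S2 IH /yb /v /= -addn1 natrD; ring.
Qed.

Lemma Ep_S4_le n : (1 <= n)%N -> Ep n (fun s => Sy s ^+ 4) <= n%:R ^+ 2 / 2.
Proof.
move=> n1; rewrite Ep_S4.
have [p0 p1] : 0 <= p /\ p <= 1 by case/andP: p01.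
have hn : 1 <= n%:R :> R by rewrite ler1n.
have hv0 : 0 <= v by rewrite /v; nra.
have hv : v <= 1/4 by rewrite /v; have := sqr_ge0 (p - 1/2); rewrite expr2; nra.
have h3 : (1 - p) ^+ 3 + p ^+ 3 <= 1.
  have : 0 <= p * (1 - p) by nra.
  move=> h; have -> : (1 - p) ^+ 3 + p ^+ 3 = 1 - 3 * (p * (1 - p)) by ring.
  lra.
have h3' : 0 <= (1 - p) ^+ 3 + p ^+ 3 by rewrite addr_ge0 // exprn_ge0 // subr_ge0.
have e1 : v * ((1 - p) ^+ 3 + p ^+ 3) <= 1/4.
  apply: le_trans hv; rewrite -[X in _ <= X]mulr1; exact: ler_wpM2l.
have e1' : 0 <= v * ((1 - p) ^+ 3 + p ^+ 3) by exact: mulr_ge0.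
have e2 : v ^+ 2 <= 1/16 by rewrite expr2; nra.
set N := n%:R in hn *; set e := v * _ in e1 e1' *.
nra.
Qed.


Lemma Ep_ge0 n F : (forall s, size s = n -> 0 <= F s) -> 0 <= Ep n F.
Proof. by move=> h; rewrite -(Ep_const n 0); exact: Ep_le. Qed.

Lemma Ep_bad_le1 n (eps : R) :
  Ep n (fun s => (nat_of_bool (eps <= `|meanb R s - p|))%:R) <= 1.
Proof. rewrite -[X in _ <= X](Ep_const n 1); apply: Ep_le => s _; by case: (eps <= `|meanb R s - p|). Qed.

Lemma Ep_bad_ge0 n (eps : R) :
  0 <= Ep n (fun s => (nat_of_bool (eps <= `|meanb R s - p|))%:R).
Proof. by apply: Ep_ge0 => s _; case: (eps <= `|meanb R s - p|). Qed.

Lemma Ep_bad_le n (eps : R) : 0 < eps -> (1 <= n)%N ->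
  Ep n (fun s => (nat_of_bool (eps <= `|meanb R s - p|))%:R) <= 1 / (2 * n%:R ^+ 2 * eps ^+ 4).
Proof.
move=> e0 n1.
have n0 : 0 < n%:R :> R by rewrite ltr0n.
have c0 : 0 < (n%:R * eps) ^+ 4 by rewrite exprn_gt0 // mulr_gt0.
apply: (@le_trans _ _ (Ep n (fun s => ((n%:R * eps) ^+ 4)^-1 * Sy s ^+ 4))).
  apply: Ep_le => s hs; case: (boolP (eps <= _)) => h /=; last first.
    apply: mulr_ge0; first by rewrite invr_ge0 ltW.
    by rewrite -[4%N]/(2 * 2)%N exprM sqr_ge0.
  rewrite mulrC ler_pdivlMr // mul1r.
  have hS : `|Sy s| = n%:R * `|meanb R s - p|.
    rewrite Sy_count /meanb hs; case: eqP => [n00|_]; first by move: n1; rewrite n00.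
    rewrite -[X in _ = X * _](ger0_norm (ltW n0)) -normrM; congr `|_|; field; by rewrite gt_eqF.
  have : n%:R * eps <= `|Sy s| by rewrite hS ler_wpM2l // ltW.
  move=> h2; have : (n%:R * eps) ^+ 4 <= `|Sy s| ^+ 4.
    by rewrite lerXn2r // ?nnegrE ?normr_ge0 // mulr_ge0 // ltW.
  have -> : `|Sy s| ^+ 4 = Sy s ^+ 4.
    by rewrite -[4%N]/(2 * 2)%N !exprM real_normK ?num_real.
  by [].
rewrite Ep_scale.
apply: (@le_trans _ _ (((n%:R * eps) ^+ 4)^-1 * (n%:R ^+ 2 / 2))).
  by apply: ler_wpM2l; [rewrite invr_ge0 ltW | exact: Ep_S4_le].
have e4 : 0 < eps ^+ 4 by rewrite exprn_gt0.
rewrite le_eqVlt; apply/orP; left; apply/eqP.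
rewrite exprMn; field.
by rewrite !gt_eqF // ?exprn_gt0.
Qed.

End EpSec.

Section Det.
Variables (R : realType) (M K : nat) (mu : 'I_M -> 'I_K -> R) (delta : R).
Variables (gp : bool) (hung : ('I_M -> 'I_K -> R) -> assignment M K)
  (sel : ('I_M -> 'I_K -> nat) -> assignment M K -> 'I_M).
Variables (X : 'I_M -> 'I_K -> nat -> bool) (coin : nat -> bool)
  (unif : nat -> 'I_K).

Definition bits (m : 'I_M) (k : 'I_K) a n := [seq X m k j | j <- iota a n].
Definition Ebad (m : 'I_M) (k : 'I_K) (s : seq bool) : bool :=
  delta / M%:R <= `|meanb R s - mu m k|.
Definition Phi (N : 'I_M -> 'I_K -> nat) : nat :=
  \sum_(m < M) \sum_(k < K) \sum_(0 <= n < N m k) Ebad m k (bits m k 0 n).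
Definition Inv (st : state M K) := forall m k, st.2 m k = count id (bits m k 0 (st.1 m k)).

Lemma count_bits_add m k n (h : bool) :
  count id (bits m k 0 (n + h)) = (count id (bits m k 0 n) + (h && X m k n))%N.
Proof.
by rewrite /bits iotaD map_cat count_cat; case: h => //=; rewrite add0n addn0.
Qed.

Lemma inv_step t st : Inv st -> Inv (step gp hung sel X coin unif t st).
Proof.
move=> I m k; rewrite /step /=.
by rewrite I !count_bits_add andbA.
Qed.


Lemma inv_state n : Inv (state_before gp hung sel X coin unif n).
Proof.
elim: n => [|n IH] /=; first by move=> m k; rewrite /bits /=.
exact: inv_step.
Qed.

Lemma sum_nat_mono (F : nat -> nat) a b : (a <= b)%N ->
  (\sum_(0 <= n < a) F n <= \sum_(0 <= n < b) F n)%N.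
Proof. by move=> ab; rewrite (big_cat_nat (n:=a) (leq0n a) ab) /= leq_addr. Qed.

Lemma sum_lt_helper (I : finType) (f g : I -> nat) i0 c :
  (forall i, f i <= g i)%N -> (f i0 + c <= g i0)%N ->
  (\sum_i f i + c <= \sum_i g i)%N.
Proof.
move=> fg h; rewrite (bigD1 i0) // [X in (_ <= X)%N](bigD1 i0) //=.
rewrite addnAC; apply: leq_add => //; exact: leq_sum.
Qed.

Lemma Phi_mono (N N' : 'I_M -> 'I_K -> nat) :
  (forall m k, N m k <= N' m k)%N -> (Phi N <= Phi N')%N.
Proof.
move=> h; apply: leq_sum => m _; apply: leq_sum => k _; exact: sum_nat_mono.
Qed.

Lemma U_inj (G : assignment M K) (w : 'I_M -> 'I_K -> R) :
  injective (fun m => G m) -> U G w = \sum_(m < M) w m (G m).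
Proof.
move=> inj; apply: eq_bigr => m _.
case: forallP => // -[] m'; apply/implyP => nm; apply: contra nm => /eqP e.
by apply/eqP; exact: inj.
Qed.

Lemma deviation (G : assignment M K) (a b : 'I_M -> 'I_K -> R) :
  (0 < M)%N -> injective (fun m => G m) ->
  delta <= `|U G a - U G b| ->
  exists m, delta / M%:R <= `|a m (G m) - b m (G m)|.
Proof.
move=> M0 inj h.
case: (boolP [exists m, delta / M%:R <= `|a m (G m) - b m (G m)|]).
  by move=> /existsP[m hm]; exists m.
rewrite negb_exists => /forallP hall; exfalso.
have : `|U G a - U G b| < delta.
  rewrite !U_inj // -sumrB; apply: (le_lt_trans (ler_norm_sum _ _ _)).
  have -> : delta = \sum_(m < M) (delta / M%:R).
    by rewrite sumr_const card_ord -[_ *+ M]mulr_natr divfK // pnatr_eq0 -lt0n.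
  apply: ltr_sum; first by apply/hasP; exists (Ordinal M0); rewrite ?mem_index_enum.
  by move=> m _; move: (hall m); rewrite -ltNge.
by rewrite ltNge h.
Qed.

Lemma Phi_step t st : Inv st -> hungarian_spec hung -> (0 < M)%N ->
  (Phi st.1 + nat_of_bool (delta <= `|U (hung (muhat R st.1 st.2)) (muhat R st.1 st.2)
     - U (hung (muhat R st.1 st.2)) mu|)%R <= Phi (step gp hung sel X coin unif t st).1)%N.
Proof.
move=> I hs M0; set mh := muhat R st.1 st.2; set G := hung mh.
have mono : forall m k, (st.1 m k <= (step gp hung sel X coin unif t st).1 m k)%N.
  by move=> m k; rewrite /step /= -addnA leq_addr.
case: (boolP (delta <= _)) => hd; last by rewrite addn0; exact: Phi_mono.
have [inj _] := hs mh.
have [m0 hm0] := deviation M0 (injectiveP _ inj) hd.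
apply: (sum_lt_helper (i0 := m0)).
  by move=> m; apply: leq_sum => k _; exact: sum_nat_mono.
apply: (sum_lt_helper (i0 := G m0)); first by move=> k; exact: sum_nat_mono.
have lt : (st.1 m0 (G m0) < (step gp hung sel X coin unif t st).1 m0 (G m0))%N.
  by rewrite /step /= eqxx addn1 ltnS leq_addr.
apply: leq_trans (sum_nat_mono _ lt).
rewrite big_nat_recr //= leq_add2l.
have E : meanb R (bits m0 (G m0) 0 (st.1 m0 (G m0))) = mh m0 (G m0).
  by rewrite /mh /muhat /meanb I /bits size_map size_iota.
by rewrite /Ebad E hm0.
Qed.


Lemma partial_le T : hungarian_spec hung -> (0 < M)%N ->
  (\sum_(1 <= t < T.+1) inB mu delta gp hung sel X coin unif t
     <= Phi (state_before gp hung sel X coin unif T).1)%N.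
Proof.
move=> hs M0; elim: T => [|T IH]; first by rewrite big_geq.
rewrite big_nat_recr //=.
apply: leq_trans (Phi_step _ (inv_state T) hs M0).
by rewrite leq_add2r.
Qed.

End Det.

Lemma series_bound (R : realType) (a : R) (q : nat -> R) : 0 < a ->
  (forall n, 0 <= q n <= 1) ->
  (forall n, (1 <= n)%N -> q n <= a ^+ 2 / (2 * n%:R ^+ 2)) ->
  forall N, \sum_(0 <= n < N) q n <= 1 + 2 * a.
Proof.
move=> a0 q01 qle N.
set n0 := (Num.Def.trunc a).+1.
have /andP[h1 h2] := truncn_itv (ltW a0). rewrite -/n0 in h2.
have hn0 : n0%:R <= a + 1 by rewrite /n0 -addn1 natrD lerD2r.
have n01 : (1 <= n0)%N by [].
have q0 n : 0 <= q n by case/andP: (q01 n).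
apply: (@le_trans _ _ (\sum_(0 <= n < maxn N n0) q n)).
  rewrite (big_cat_nat (n:=N) (leq0n N) (leq_maxl N n0)) /= lerDl.
  by apply: sumr_ge0 => i _.
rewrite (big_cat_nat (n:=n0) (leq0n n0) (leq_maxr N n0)) /=.
have -> : 1 + 2 * a = (a + 1) + a by ring.
apply: lerD.
  apply: (@le_trans _ _ (\sum_(0 <= n < n0) (1 : R))).
    by apply: ler_sum => i _; case/andP: (q01 i).
  by rewrite sumr_const_nat subn0.
apply: (@le_trans _ _ (\sum_(n0 <= n < maxn N n0) a ^+ 2 * (- (n.+1%:R)^-1 - - (n%:R)^-1))).
  rewrite big_nat [X in _ <= X]big_nat; apply: ler_sum => i /andP[hi _].
  have i1 : (1 <= i)%N by exact: leq_trans hi.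
  have ip : 0 < i%:R :> R by rewrite ltr0n.
  apply: le_trans (qle _ i1) _.
  rewrite ler_wpM2l ?sqr_ge0 //.
  rewrite opprK addrC -[i.+1]addn1 natrD.
  have -> : (i%:R)^-1 - (i%:R + 1%:R)^-1 = ((i%:R * (i%:R + 1)))^-1 :> R.
    by field; rewrite !gt_eqF // ?ltr_wpDr ?ltW //.
  rewrite lef_pV2 ?posrE ?mulr_gt0 ?exprn_gt0 ?addr_gt0 //.
  have : 1 <= i%:R :> R by rewrite ler1n.
  move=> hi1; nra.
rewrite -mulr_sumr telescope_sumr ?leq_maxr //.
apply: (@le_trans _ _ (a ^+ 2 * (n0%:R)^-1)).
  by rewrite ler_wpM2l ?sqr_ge0 // opprK gerDr oppr_le0 invr_ge0.
have n0p : 0 < n0%:R :> R by rewrite ltr0n.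
rewrite expr2 -mulrA ger_pMr // ler_pdivrMr // mul1r ltW //.
Qed.

Section Meas.
Local Open Scope classical_set_scope.
Variables (R : realType) (M K : nat) (mu : 'I_M -> 'I_K -> R).
Variables (d : measure_display) (T : measurableType d) (P : probability T R).
Variables (X : 'I_M -> 'I_K -> nat -> T -> bool) (coin : nat -> T -> bool)
  (unif : nat -> T -> 'I_K).
Hypothesis law : randomness_law P mu X coin unif.
Variables (m : 'I_M) (k : 'I_K).

Definition bitsw a n w := [seq X m k j w | j <- iota a n].
Definition wt (c : bool) : R := if c then mu m k else 1 - mu m k.

Lemma cyl_meas (s1 : seq nat) b1 :
  measurable [set w | all (fun j => X m k j w == b1 j) s1].
Proof.
case: law => mX _ _ _.
elim: s1 => [|j s IH] /=; first by rewrite (_ : [set w | true] = setT) //; apply/seteqP; split.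
rewrite (_ : [set w | (X m k j w == b1 j) && all (fun j => X m k j w == b1 j) s] =
   [set w | X m k j w = b1 j] `&` [set w | all (fun j => X m k j w == b1 j) s]).
  exact: measurableI.
by apply/seteqP; split => w /=; [move/andP=> [/eqP]|move=> [-> ->]; rewrite eqxx].
Qed.

Lemma cyl_prob (s1 : seq nat) b1 : uniq s1 ->
  P [set w | all (fun j => X m k j w == b1 j) s1] = (\prod_(j <- s1) wt (b1 j))%:E.
Proof.
move=> us; case: law => _ _ _ hl.
have := hl [seq (m, k, j) | j <- s1] [::] [::] (fun e => b1 e.2) (fun _ => true) (fun _ => k).
rewrite big_map /= expr0 !mulr1 => <- //; last by rewrite map_inj_uniq // => x y [].
congr (P _); apply/seteqP; split => w /=; by rewrite all_map andbT.
Qed.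


Lemma key n : forall a (s1 : seq nat) (b1 : nat -> bool) (G : seq bool -> bool),
  uniq s1 -> all (fun j => (j < a)%N) s1 ->
  measurable [set w | all (fun j => X m k j w == b1 j) s1 && G (bitsw a n w)] /\
  P [set w | all (fun j => X m k j w == b1 j) s1 && G (bitsw a n w)] =
    ((\prod_(j <- s1) wt (b1 j)) * Ep (mu m k) n (fun s => (nat_of_bool (G s))%:R))%:E.
Proof.
elim: n => [|n IH] a s1 b1 G us sa /=.
  case: (G [::]) => /=.
    rewrite (_ : [set w | _ && true] = [set w | all (fun j => X m k j w == b1 j) s1]); last first.
      by apply/seteqP; split => w /=; rewrite andbT.
    by rewrite cyl_prob // mulr1; split => //; exact: cyl_meas.
  rewrite (_ : [set w | _ && false] = set0); last by apply/seteqP; split => w //=; rewrite andbF.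
  by rewrite measure0 mulr0; split.
pose b1c (c : bool) j := if j == a then c else b1 j.
have anotin : a \notin s1.
  by apply/negP => h; move: (allP sa a h) => /=; rewrite ltnn.
have us' : uniq (a :: s1) by rewrite /= anotin.
have sa' : all (fun j => (j < a.+1)%N) (a :: s1).
  rewrite /= ltnSn /=; apply: sub_all sa => j /= /ltnW; by rewrite ltnS.
have hall c w : all (fun j => X m k j w == b1c c j) s1 = all (fun j => X m k j w == b1 j) s1.
  apply: eq_in_all => j /(allP sa) /= ja; rewrite /b1c.
  case: (eqVneq j a) => [ea|//]; by move: ja; rewrite ea ltnn.
have [mt Pt] := IH a.+1 (a :: s1) (b1c true) (fun s => G (true :: s)) us' sa'.
have [mf Pf] := IH a.+1 (a :: s1) (b1c false) (fun s => G (false :: s)) us' sa'.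
set At := [set w | _] in mt Pt; set Af := [set w | _] in mf Pf.
have eA : [set w | all (fun j => X m k j w == b1 j) s1 && G (X m k a w :: bitsw a.+1 n w)] = At `|` Af.
  apply/seteqP; split => w /=.
    rewrite /At /Af /= !hall /b1c eqxx.
    by case: (X m k a w) => /= h; [left|right].
  rewrite /At /Af /= !hall /b1c eqxx; by case=> /andP[/andP[/eqP -> ->] ->].
have dA : At `&` Af = set0.
  apply/seteqP; split => w //=; rewrite /At /Af /= /b1c eqxx.
  by case=> /andP[/andP[/eqP -> _] _] /andP[/andP[]].
rewrite eA; split; first exact: measurableU.
rewrite measureU //; etransitivity; first exact: (congr2 (fun x y => (x + y)%E) Pt Pf).
rewrite -EFinD; congr (_%:E).
have ep c : \prod_(j <- s1) wt (b1c c j) = \prod_(j <- s1) wt (b1 j).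
  apply: eq_big_seq => j js; have /= ja := allP sa j js.
  by rewrite /b1c ifN // neq_ltn ja.
rewrite !big_cons !ep /b1c !eqxx /wt /=; ring.
Qed.

Lemma prob_bad n (eps : R) :
  measurable [set w | eps <= `|meanb R (bitsw 0 n w) - mu m k|] /\
  P [set w | eps <= `|meanb R (bitsw 0 n w) - mu m k|] =
    (Ep (mu m k) n (fun s => (nat_of_bool (eps <= `|meanb R s - mu m k|))%:R))%:E.
Proof.
have [h1 h2] := @key n 0 [::] (fun _ => true) (fun s => eps <= `|meanb R s - mu m k|) isT isT.
by rewrite big_nil mul1r in h2.
Qed.

End Meas.

Lemma le_integral_nm (R : realType) (d : measure_display) (T : measurableType d)
  (P : probability T R) (f g : T -> \bar R) :
  (forall x, (0 <= f x)%E) -> (forall x, (f x <= g x)%E) ->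
  (\int[P]_x f x <= \int[P]_x g x)%E.
Proof.
move=> f0 fg.
have g0 x : (0 <= g x)%E by exact: le_trans (f0 x) (fg x).
rewrite !ge0_integralTE //; apply: le_ereal_sup => _ /= [h hf <-].
by exists h => //= x; exact: le_trans (hf x) (fg x).
Qed.

Unset Implicit Arguments.
Set Strict Implicit.

Theorem lemma4 (R : realType) (M K : nat) (mu : 'I_M -> 'I_K -> R) (delta : R)
  (d : measure_display) (T : measurableType d) (P : probability T R)
  (X : 'I_M -> 'I_K -> nat -> T -> bool) (coin : nat -> T -> bool)
  (unif : nat -> T -> 'I_K)
  (hung : ('I_M -> 'I_K -> R) -> {ffun 'I_M -> 'I_K})
  (sel : ('I_M -> 'I_K -> nat) -> {ffun 'I_M -> 'I_K} -> 'I_M)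
  (gp : bool) :
  (0 < M)%N -> (M < K)%N ->
  (forall m k, 0 <= mu m k <= 1) ->
  unique_optimum mu ->
  0 < delta ->
  hungarian_spec hung ->
  sel_spec sel ->
  randomness_law P mu X coin unif ->
  (\int[P]_w cardB mu delta gp hung sel (fun m k j => X m k j w)
                   (fun t => coin t w) (fun t => unif t w)
   <= (4 * M * K)%:R%:E + (2 * M%:R ^+ 3 * K%:R / delta ^+ 2)%:E)%E.
Proof.
move=> M0 MK mu01 _ d0 hs _ law.
have Mp : 0 < M%:R :> R by rewrite ltr0n.
set eps := delta / M%:R.
have e0 : 0 < eps by rewrite divr_gt0.
pose b m k n w := nat_of_bool (eps <= `|meanb R (bitsw X m k 0 n w) - mu m k|).
pose Fw w := (\sum_(m < M) \sum_(k < K) \sum_(n <oo) ((b m k n w)%:R : R)%:E)%E.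
have b0 m k n w : (0 <= ((b m k n w)%:R : R)%:E)%E by rewrite lee_fin ler0n.
have Fw0 w : (0 <= Fw w)%E.
  by apply: sume_ge0 => m _; apply: sume_ge0 => k _; apply: nneseries_ge0.
apply: (@le_trans _ _ (\int[P]_w Fw w)%E).
  apply: le_integral_nm => w.
    by apply: nneseries_ge0 => n _ _; rewrite lee_fin ler0n.
  rewrite /cardB; apply: lime_le.
    by apply: is_cvg_nneseries => n _ _; rewrite lee_fin ler0n.
  apply: nearW => T'; case: T' => [|T']; first by rewrite big_geq.
  rewrite sumEFin -natr_sum.
  apply: (@le_trans _ _ ((Phi mu delta (fun m k j => X m k j w)
      (state_before gp hung sel (fun m k j => X m k j w) (fun t => coin t w)
         (fun t => unif t w) T').1)%:R)%:E).
    by rewrite lee_fin ler_nat partial_le.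
  rewrite /Phi natr_sum -sumEFin; apply: lee_sum => m _.
  rewrite natr_sum -sumEFin; apply: lee_sum => k _.
  rewrite natr_sum -sumEFin.
  by apply: nneseries_lim_ge => n _ _; rewrite lee_fin ler0n.
have ind m k n : (fun w => ((b m k n w)%:R : R)%:E) =
    (fun w => (\1_[set w | eps <= `|meanb R (bitsw X m k 0 n w) - mu m k|] w)%:E).
  apply/funext => w; rewrite indicE /b.
  case: (boolP (eps <= _)) => h; first by rewrite mem_set.
  by rewrite memNset //= => h'; move: h; rewrite h'.
have mb m k n : measurable_fun [set: T] (fun w => ((b m k n w)%:R : R)%:E).
  have [mE _] := prob_bad law m k n eps.
  rewrite ind; apply/measurable_EFinP; exact: measurable_indic.
have ib m k n : (\int[P]_w ((b m k n w)%:R : R)%:E =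
    (Ep (mu m k) n (fun s => (nat_of_bool (eps <= `|meanb R s - mu m k|))%:R))%:E)%E.
  have [mE PE] := prob_bad law m k n eps.
  by rewrite ind integral_indic // setIT.
set a := (eps ^+ 2)^-1.
have a0 : 0 < a by rewrite invr_gt0 exprn_gt0.
have sb m k : (\sum_(n <oo) (Ep (mu m k) n
     (fun s => (nat_of_bool (eps <= `|meanb R s - mu m k|))%:R))%:E <= (1 + 2 * a)%:E)%E.
  apply: lime_le.
    by apply: is_cvg_nneseries => n _ _; rewrite lee_fin Ep_bad_ge0.
  apply: nearW => N; rewrite sumEFin lee_fin.
  apply: series_bound => // [n|n n1].
    by rewrite Ep_bad_ge0 ?Ep_bad_le1.
  apply: le_trans (Ep_bad_le (mu01 m k) e0 n1) _.
  rewrite le_eqVlt; apply/orP; left; apply/eqP; rewrite /a.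
  have n0 : 0 < n%:R :> R by rewrite ltr0n.
  field; by rewrite !gt_eqF ?exprn_gt0.
have ms m k : measurable_fun [set: T] (fun w => (\sum_(n <oo) ((b m k n w)%:R : R)%:E)%E).
  exact: ge0_emeasurable_sum.
rewrite /Fw ge0_integral_sum //; last first.
  by move=> m w _; apply: sume_ge0 => k _; apply: nneseries_ge0.
  by move=> m; apply: emeasurable_sum => k; exact: ms.
apply: (@le_trans _ _ (\sum_(m < M) \sum_(k < K) (1 + 2 * a)%:E)%E).
  apply: lee_sum => m _; rewrite ge0_integral_sum //; last first.
    by move=> k w _; apply: nneseries_ge0.
  apply: lee_sum => k _; rewrite integral_nneseries //.
  by under eq_eseriesr do rewrite ib.
under eq_bigr do rewrite sumEFin.
rewrite sumEFin -EFinD lee_fin !sumr_const !card_ord -[_ *+ K]mulr_natr -[_ *+ M]mulr_natr.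
have ea : a = M%:R ^+ 2 / delta ^+ 2.
  rewrite /a /eps; field; by rewrite !gt_eqF.
rewrite ea.
have -> : (1 + 2 * (M%:R ^+ 2 / delta ^+ 2)) * K%:R * M%:R =
   M%:R * K%:R + 2 * M%:R ^+ 3 * K%:R / delta ^+ 2 :> R.
  field; by rewrite gt_eqF.
rewrite lerD2r -natrM ler_nat -mulnA leq_pmull //.
Qed.
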